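(* Let $L$ be an oriented, ordered, compatible virtual link diagram with components $L_1,\dots,L_n$, and let $C$ be an affine bilabeling of $L$. Then the multi-variable affine index polynomial $$p_{(L,C)}(t_1,\dots,t_n)=\sum_{c}\operatorname{sgn}(c)\bigl(t_{o(c)}^{W(c)}-1\bigr)$$ is an invariant of the pair $(L,C)$: it is unchanged under classical and virtual Reidemeister moves, where the bilabeling is carried along, i.e. labels on arcs outside the local disc of the move are unchanged. Moreover, this invariant generalizes the earlier affine index polynomials. (i) For every $i$, collapse the starting bilabel of $L_i$ to the single label $A_i=a^{(i)}_1+a^{(i)}_2$ and form Kauffman's compatible-link affine index polynomial $P_L(t)$ from it. Then substituting $t_1=\dots=t_n=t$ gives $p_{(L,C)}(t,\dots,t)=P_L(t)$. (ii) If $n=1$, so that $L=K$ is a virtual knot, then $p_{(K,C)}(t)$ equals the Affine Index Polynomial $P_K(t)$.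
   Context: **Diagrams.** A virtual link diagram is an oriented planar diagram of ordered closed curves $L_1,\dots,L_n$, called components. Its crossings are either classical (with over/under information) or virtual. Diagrams are considered up to the classical and virtual Reidemeister moves. **Crossing conventions.** Draw a classical crossing with both strands oriented upward. - The strand running from bottom-left to top-right has index change $-1$; the strand running from bottom-right to top-left has index change $+1$. - The crossing is positive ($\operatorname{sgn}=+1$) if the overstrand is the bottom-left-to-top-right strand, and negative otherwise. - A classical crossing is a self-crossing if both strands lie on the same component, and external otherwise. - For each component $L_i$, its weight $n_i$ is the sum of the index changes of $L_i$ over all its passages through external classical crossings (its algebraic intersection number with the other components). - $L$ is compatible if $n_i=0$ for all $i$. **Affine bilabeling $C$.** - For each component $L_i$, choose a starting point on it and give it a bilabel $(a^{(i)}_1,a^{(i)}_2)$ of formal integer variables, distinct for different components. - Travel along $L_i$ in its orientation and carry the bilabel along the arcs. It is unchanged at virtual crossings. - On passing through a classical crossing with index change $\varepsilon$, the first entry changes by $\varepsilon$ if the crossing is a self-crossing, and the second entry changes by $\varepsilon$ if it is external. - For compatible $L$, the labels close up consistently. **Crossing weight $W(c)$.** For a bilabel $(x,y)$, put $|(x,y)|=x+y$. Draw $c$ with both strands upward. - If $c$ is positive, $W(c)=|\text{bottom-left label}|-|\text{top-left label}|$. - If $c$ is negative, $W(c)=|\text{bottom-right label}|-|\text{top-right label}|$. **The polynomial.** $o(c)$ denotes the index of the component containing the overstrand of $c$. The sum defining $p_{(L,C)}$ runs over all classical crossings; exponents are integer linear combinations of the variables. Equivalently, $p_{(L,C)}=\sum_c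 \operatorname{sgn}(c)\,t_{o(c)}^{W(c)}-\mathrm{writhe}(L)$. **Kauffman's affine labeling and $P_L(t)$.** - Give each component a single starting label and propagate it by adding the index change at every classical crossing, both self and external. - Weights: for positive $c$, $W(c)=(\text{bottom-left})-(\text{top-left})$; for negative $c$, $W(c)=(\text{bottom-right})-(\text{top-right})$. - $P_L(t)=\sum_c\operatorname{sgn}(c)(t^{W(c)}-1)$. - For a virtual knot $K$, this polynomial is independent of the starting label and is the Affine Index Polynomial $P_K(t)$. *)

(* Defs.v *)
From mathcomp Require Import all_boot all_order all_algebra.
From Stdlib Require Export Relations.Relation_Operators.
Set Implicit Arguments. Unset Strict Implicit. Unset Printing Implicit Defensive.
Import GRing.Theory Num.Theory.
Local Open Scope ring_scope.

(* A passage through a classical crossing: (crossing label, is it the over-passage?) *)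
Definition passage := (nat * bool)%type.

(* An ordered, oriented virtual link diagram with n components, given by its
   signed Gauss code: component i is read, from its starting point and along its
   orientation, as the word [gw D i] of passages through classical crossings
   (virtual crossings are invisible).  [gsg D c] is true iff crossing c is
   positive.  The starting point of each component is the beginning of its word. *)
Record gdiag (n : nat) := GDiag { gw : 'I_n -> seq passage; gsg : nat -> bool }.

Section Defs.
Context {n : nat}.
Implicit Types (D : gdiag n).

Definition occ D (x : passage) : nat := (\sum_(i < n) count_mem x (gw D i))%N.

Definition wf D : Prop :=
  forall c : nat, occ D (c, true) = occ D (c, false) /\ (occ D (c, true) <= 1)%N.

Definition crossings D : seq nat :=
  undup (flatten [seq map fst (gw D i) | i <- enum 'I_n]).

Definition sg D (c : nat) : int := if gsg D c then 1 else -1.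

(* index change of a passage: the over strand of a positive crossing runs
   bottom-left to top-right (index change -1), etc. *)
Definition dch D (x : passage) : int := if x.2 then - sg D x.1 else sg D x.1.

Definition is_self D (c : nat) : bool :=
  [exists i : 'I_n, ((c, true) \in gw D i) && ((c, false) \in gw D i)].

Definition weight D (i : 'I_n) : int :=
  \sum_(x <- gw D i | ~~ is_self D x.1) dch D x.

Definition compatible D : Prop := forall i : 'I_n, weight D i = 0.

(* integer linear forms in the formal variables a^(i)_1, a^(i)_2
   (index (i,false), (i,true)); the coefficient at None is the constant term *)
Definition linform := {ffun option ('I_n * bool) -> int}.
Definition lvar (i : 'I_n) (b : bool) : linform := [ffun v => ((v == Some (i, b)) : nat)%:Z].
Definition lcst (z : int) : linform := [ffun v => if v is None then z else 0].

(* bilabel on the arc of L_i after its first k passages *)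
Definition bilab D (i : 'I_n) (k : nat) : linform * linform :=
  (lvar i false + lcst (\sum_(x <- take k (gw D i) | is_self D x.1) dch D x),
   lvar i true + lcst (\sum_(x <- take k (gw D i) | ~~ is_self D x.1) dch D x)).

Definition babs (l : linform * linform) : linform := l.1 + l.2.

(* generic crossing weight: (label on incoming arc of the overstrand) minus
   (label on outgoing arc of the understrand); this is bottom-left minus top-left
   for positive crossings and bottom-right minus top-right for negative ones *)
Definition Wgen (V : zmodType) D (lab : 'I_n -> nat -> V) (c : nat) : V :=
  \sum_(i < n) \sum_(k < size (gw D i) | nth (0%N, false) (gw D i) k == (c, true)) lab i k
  - \sum_(i < n) \sum_(k < size (gw D i) | nth (0%N, false) (gw D i) k == (c, false)) lab i k.+1.

Definition Wbi D (c : nat) : linform := Wgen D (fun i k => babs (bilab D i k)) c.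

(* monomials t_k^e of the group ring; None is the monomial 1 (= t_k^0 for all k) *)
Definition mono := option ('I_n * linform).
Definition mkey (i : 'I_n) (e : linform) : mono := if e == 0 then None else Some (i, e).

(* coefficient of the monomial m in p_(L,C) = sum_c sgn(c) (t_{o(c)}^{W(c)} - 1) *)
Definition pcoef D (m : mono) : int :=
  \sum_(c <- crossings D)
     sg D c * ((\sum_(i < n | (c, true) \in gw D i) ((mkey i (Wbi D c) == m) : nat))%N%:Z
               - ((m == None) : nat)%:Z).

(* specialization t_1 = ... = t_n = t : coefficient of t^e *)
Definition spec (p : mono -> int) (e : linform) : int :=
  if e == 0 then p None else \sum_(i < n) p (Some (i, e)).

(* Kauffman's affine labeling with starting labels st, labels in V, integers
   embedded by inj; coefficient of t^e in P_L(t) = sum_c sgn(c)(t^{W(c)} - 1) *)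
Definition klab (V : zmodType) (inj : int -> V) (st : 'I_n -> V) D (i : 'I_n) (k : nat) : V :=
  st i + inj (\sum_(x <- take k (gw D i)) dch D x).

Definition kpoly (V : zmodType) (inj : int -> V) (st : 'I_n -> V) D (e : V) : int :=
  \sum_(c <- crossings D)
     sg D c * (((Wgen D (klab inj st D) c == e) : nat)%:Z - ((e == 0) : nat)%:Z).

(* ---- Reidemeister moves on Gauss codes (the starting points lie outside the
   disc of the move, so the local pieces are contiguous in the linear words) ---- *)

Definition adj (s : seq passage) (p q : passage) : bool :=
  has (fun k => (k.+1 < size s)%N && (nth (0%N, false) s k == p)
                && (nth (0%N, false) s k.+1 == q)) (iota 0 (size s)).

Definition r1step D (D' : gdiag n) : Prop :=
  exists (c : nat) (b : bool),
    (exists i : 'I_n, adj (gw D i) (c, b) (c, ~~ b)) /\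
    (forall i, gw D' i = [seq x <- gw D i | x.1 != c]) /\
    {in crossings D', gsg D' =1 gsg D}.

Definition r2step D (D' : gdiag n) : Prop :=
  exists c d : nat,
    c != d /\ gsg D c != gsg D d /\
    (exists i : 'I_n, adj (gw D i) (c, true) (d, true)) /\
    (exists j : 'I_n, adj (gw D j) (c, false) (d, false) || adj (gw D j) (d, false) (c, false)) /\
    (forall i, gw D' i = [seq x <- gw D i | (x.1 != c) && (x.1 != d)]) /\
    {in crossings D', gsg D' =1 gsg D}.

Definition seg (s : seq passage) (k : nat) (p q : passage) : bool :=
  (k.+1 < size s)%N &&
  (((nth (0%N, false) s k == p) && (nth (0%N, false) s k.+1 == q)) ||
   ((nth (0%N, false) s k == q) && (nth (0%N, false) s k.+1 == p))).

Definition swp (s : seq passage) (k : nat) : seq passage :=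
  take k s ++ [:: nth (0%N, false) s k.+1; nth (0%N, false) s k] ++ drop k.+2 s.

Definition swp_if (b : bool) (k : nat) (s : seq passage) := if b then swp s k else s.

Definition pm (b : bool) : int := if b then 1 else -1.

(* The sign condition characterizes the triangles that
   occur in the plane (derived from three oriented lines in general position). *)
Definition r3step D (D' : gdiag n) : Prop :=
  exists (i1 i2 i3 : 'I_n) (k1 k2 k3 x y z : nat),
    [&& x != y, y != z & x != z] /\
    seg (gw D i1) k1 (x, true) (y, true) /\
    seg (gw D i2) k2 (x, false) (z, true) /\
    seg (gw D i3) k3 (y, false) (z, false) /\
    (let o1 := nth (0%N, false) (gw D i1) k1 == (x, true) in
     let o2 := nth (0%N, false) (gw D i2) k2 == (x, false) in
     let o3 := nth (0%N, false) (gw D i3) k3 == (y, false) in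
     pm o2 * sg D x = pm o3 * sg D y /\ pm o2 * sg D z = pm o1 * sg D y) /\
    (forall i, gw D' i = swp_if (i == i3) k3 (swp_if (i == i2) k2 (swp_if (i == i1) k1 (gw D i)))) /\
    {in crossings D, gsg D' =1 gsg D}.

Definition rstep D (D' : gdiag n) : Prop := r1step D D' \/ r2step D D' \/ r3step D D'.

Definition rmove D (D' : gdiag n) : Prop := wf D /\ wf D' /\ (rstep D D' \/ rstep D' D).

End Defs.

(* embedding of a one-variable Laurent polynomial (coefficients indexed by
   integer exponents) into the group ring for n = 1 *)
Definition embed1 (Q : int -> int) (m : @mono 1) : int :=
  match m with
  | None => Q 0
  | Some (_, e) => if (e != 0) && (e == lcst (e None)) then Q (e None) else 0
  end.

(* Main.v *)
Require Import Defs.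
From mathcomp Require Import all_boot all_order all_algebra.
From mathcomp Require Import zify ring.
Import GRing.Theory Num.Theory.
Set Implicit Arguments. Unset Strict Implicit. Unset Printing Implicit Defensive.
Local Open Scope ring_scope.

Section Basic.
Variable n : nat.
Implicit Types D : gdiag n.

Lemma wf_occ D x : wf D -> (occ D x <= 1)%N.
Proof. case: x => c [|] /(_ c) [h1 h2] //; by rewrite -h1. Qed.

Lemma count_le_occ D i x : (count_mem x (gw D i) <= occ D x)%N.
Proof. rewrite /occ (bigD1 i) //=; exact: leq_addr. Qed.

Lemma uniq_of_count (T : eqType) (s : seq T) :
  (forall x, count_mem x s <= 1)%N -> uniq s.
Proof.
elim: s => //= a s IH H; apply/andP; split.
  have := H a; rewrite eqxx /= add1n ltnS leqn0 => /eqP h.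
  by apply/negP => ha; move: h; apply/eqP; rewrite -lt0n -has_count has_pred1.
apply: IH => x; apply: leq_trans (H x); exact: leq_addl.
Qed.

Lemma wf_uniq D i : wf D -> uniq (gw D i).
Proof.
move=> w; apply: uniq_of_count => x; apply: leq_trans (count_le_occ D i x) _.
exact: wf_occ.
Qed.

Lemma wf_comp D x i j : wf D -> x \in gw D i -> x \in gw D j -> i = j.
Proof.
move=> w xi xj; apply/eqP; apply/negPn/negP => nij.
have := wf_occ x w; rewrite /occ (bigD1 i) //= (bigD1 j) /=; last by rewrite eq_sym nij.
move: xi xj; rewrite -!has_pred1 !has_count => h1 h2.
have h3 := leq_addr (\sum_(i0 < n | (i0 != i) && (i0 != j)) count_mem x (gw D i0))%N
   (count_mem x (gw D j)).
move: h1 h2 h3; set a := count _ _; set b := count _ _; set c := (\sum_(_ < _ | _) _)%N.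
lia.
Qed.

Lemma sum_comp D (R : Type) (idx : R) (op : Monoid.com_law idx) x i0 (F : 'I_n -> R) :
  wf D -> x \in gw D i0 -> \big[op/idx]_(i < n | x \in gw D i) F i = F i0.
Proof.
move=> w h; rewrite (bigD1 i0) //= big1 ?Monoid.mulm1 // => i /andP [hi ne].
by rewrite (wf_comp w hi h) eqxx in ne.
Qed.

Lemma sum_pos (V : zmodType) (s : seq passage) p (F : nat -> V) :
  uniq s -> \sum_(k < size s | nth (0%N, false) s k == p) F k
            = if p \in s then F (index p s) else 0.
Proof.
move=> us; case: ifP => ps.
  have hk : (index p s < size s)%N by rewrite index_mem.
  rewrite (bigD1 (Ordinal hk)) /= ?nth_index // big1 ?addr0 // => k /andP [/eqP hk1 hne].
  exfalso; move: hne; apply/negP/negPn; apply/eqP/val_inj => /=.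
  by rewrite -hk1 index_uniq.
apply: big1 => k /eqP hk; by rewrite -hk mem_nth in ps.
Qed.

Lemma Wgen_eq (V : zmodType) D (lab : 'I_n -> nat -> V) c : wf D ->
  Wgen D lab c = \sum_(i < n | (c,true) \in gw D i) lab i (index (c,true) (gw D i))
               - \sum_(i < n | (c,false) \in gw D i) lab i (index (c,false) (gw D i)).+1.
Proof.
move=> w; rewrite /Wgen; congr (_ - _); rewrite [RHS]big_mkcond;
  apply: eq_bigr => i _.
  exact: (sum_pos (c,true) (lab i) (wf_uniq i w)).
exact: (sum_pos (c,false) (fun k => lab i k.+1) (wf_uniq i w)).
Qed.

Lemma lcstD (a b : int) : @lcst n (a + b) = lcst a + lcst b.
Proof. apply/ffunP => v; rewrite !ffunE; case: v => //; by rewrite addr0. Qed.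
Lemma lcst0 : @lcst n 0 = 0.
Proof. apply/ffunP => v; rewrite !ffunE; by case: v. Qed.
Lemma lcstN (a : int) : @lcst n (- a) = - lcst a.
Proof. apply/ffunP => v; rewrite !ffunE; case: v => //; by rewrite oppr0. Qed.
Lemma lcstB (a b : int) : @lcst n (a - b) = lcst a - lcst b.
Proof. by rewrite lcstD lcstN. Qed.
Lemma lcst_sum (I : Type) (r : seq I) (P : pred I) (F : I -> int) :
  @lcst n (\sum_(i <- r | P i) F i) = \sum_(i <- r | P i) lcst (F i).
Proof. exact: (big_morph _ lcstD lcst0). Qed.
Lemma lcst_inj : injective (@lcst n).
Proof. move=> a b /ffunP /(_ None); by rewrite !ffunE. Qed.
Lemma lcstK a : (@lcst n a) None = a.
Proof. by rewrite ffunE. Qed.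

Definition S D (s : seq passage) : int := \sum_(x <- s) dch D x.

Lemma babs_bilab D i k : babs (bilab D i k) =
  lvar i false + lvar i true + lcst (S D (take k (gw D i))).
Proof.
rewrite /babs /bilab /= /S [X in _ = _ + lcst X](bigID (fun x => is_self D x.1)) /= lcstD.
by rewrite addrACA; reflexivity.
Qed.

Definition VV D p : linform := \sum_(i < n | p \in gw D i) (lvar i false + lvar i true).
Definition PS D p : int := \sum_(i < n | p \in gw D i) S D (take (index p (gw D i)) (gw D i)).
Definition PSa D p : int :=
  \sum_(i < n | p \in gw D i) S D (take (index p (gw D i)).+1 (gw D i)).

Lemma Wbi_eq D c : wf D -> Wbi D c =
  VV D (c,true) + lcst (PS D (c,true)) - (VV D (c,false) + lcst (PSa D (c,false))).
Proof.
move=> w; rewrite /Wbi Wgen_eq //.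
under eq_bigr do rewrite babs_bilab.
under [X in _ - X]eq_bigr do rewrite babs_bilab.
by rewrite /VV /PS /PSa !lcst_sum !big_split.
Qed.

Lemma mem_crossings D c : c \in crossings D -> exists i b, (c, b) \in gw D i.
Proof.
rewrite mem_undup => /flatten_mapP [i _ /mapP [[c' b] h ->]]; by exists i, b.
Qed.

Lemma occ_exists D x : (0 < occ D x)%N -> exists i, x \in gw D i.
Proof.
move=> h; case: (boolP [exists i, x \in gw D i]) => [/existsP [i hi] | /existsPn hn].
  by exists i.
move: h; rewrite /occ big1 // => i _; apply/count_memPn; exact: hn.
Qed.

Lemma cross_occ D c : wf D -> c \in crossings D ->
  (exists i, (c,true) \in gw D i) /\ (exists j, (c,false) \in gw D j).
Proof.
move=> w /mem_crossings [i [b hb]].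
have h : (0 < occ D (c,b))%N.
  apply: leq_trans (count_le_occ D i (c,b)); by rewrite -has_count has_pred1.
have [e _] := w c.
split; apply: occ_exists; case: b h hb => //= h _; by rewrite ?e // -e.
Qed.

End Basic.

Lemma mkey_None n (i : 'I_n) e : (mkey i e == None) = (e == 0).
Proof. by rewrite /mkey; case: (e == 0). Qed.

Lemma mkey_Some n (i j : 'I_n) e f :
  (mkey i e == Some (j, f)) = [&& e != 0, i == j & e == f].
Proof. by rewrite /mkey; case: (e == 0). Qed.

Lemma part2 n (D : gdiag n) : wf D -> forall e,
  spec (pcoef D) e = kpoly lcst (fun i => lvar i false + lvar i true) D e.
Proof.
move=> w e.
have HW c : Wgen D (klab lcst (fun i => lvar i false + lvar i true) D) c = Wbi D c.
  rewrite /Wbi /Wgen; congr (_ - _); apply: eq_bigr => i _; apply: eq_bigr => k _;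
  by rewrite babs_bilab.
rewrite /kpoly; under eq_bigr do rewrite HW.
rewrite /spec; case: eqP => [-> | ne].
  rewrite /pcoef; apply: eq_big_seq => c cin.
  have [[i0 hi0] _] := cross_occ w cin.
  by rewrite (sum_comp _ _ w hi0) mkey_None.
rewrite /pcoef exchange_big /=; apply: eq_big_seq => c cin.
have [[i0 hi0] _] := cross_occ w cin.
rewrite -mulr_sumr; congr (_ * _).
under eq_bigr do rewrite (sum_comp _ _ w hi0) mkey_Some /= subr0.
rewrite (bigD1 i0) //= big1 ?addr0; last first.
  by move=> i ni; rewrite [i0 == i]eq_sym (negbTE ni) /= andbF.
rewrite eqxx /=; case: (Wbi D c =P e) => [->|]; last by rewrite andbF.
by move/eqP: ne => /negbTE ->.
Qed.

Lemma part3 (K : gdiag 1) (s : int) : wf K -> forall m : mono,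
  pcoef K m = embed1 (kpoly id (fun _ => s) K) m.
Proof.
move=> w m.
have HW c : c \in crossings K ->
   Wbi K c = lcst (Wgen K (klab id (fun _ => s) K) c).
  move=> cin; have [[i hi] [j hj]] := cross_occ w cin.
  have ij : i = j by rewrite (ord1 i) (ord1 j).
  rewrite Wbi_eq // Wgen_eq // /VV /PS /PSa.
  rewrite !(sum_comp _ _ w hi) !(sum_comp _ _ w hj) -ij /klab /S /=.
  rewrite lcstB !lcstD opprD addrACA subrr add0r.
  by rewrite opprD addrACA subrr add0r.
rewrite /pcoef /embed1 /kpoly; case: m => [[i e]|]; last first.
  apply: eq_big_seq => c cin; have [[i0 hi0] _] := cross_occ w cin.
  by rewrite (sum_comp _ _ w hi0) mkey_None HW // -lcst0 (inj_eq (@lcst_inj _)).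
case: ifP => [/andP [ne he] | hf].
  set a := e None in he *; move/eqP: he => he; rewrite he.
  have na : a != 0 by apply: contraNneq ne => ha; rewrite he ha lcst0.
  apply: eq_big_seq => c cin; have [[i0 hi0] _] := cross_occ w cin.
  rewrite (sum_comp _ _ w hi0) mkey_Some (ord1 i0) (ord1 i) eqxx /= HW //.
  rewrite -lcst0 !(inj_eq (@lcst_inj _)) (negbTE na) subr0.
  set W := Wgen _ _ _; case: (W =P a) => [->|]; first by rewrite na.
  by rewrite andbF.
apply: big1_seq => c /andP [_ cin]; have [[i0 hi0] _] := cross_occ w cin.
rewrite (sum_comp _ _ w hi0) mkey_Some HW //.
case: (boolP [&& _, _ & _]) => [/and3P [h1 _ /eqP h3] | _]; last by rewrite subr0 mulr0.
by rewrite -h3 lcstK h1 eqxx in hf.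
Qed.


Lemma sum_pred1_seq (V : zmodType) (T : eqType) (t : seq T) a (F : T -> V) :
  uniq t -> \sum_(x <- t | x == a) F x = if a \in t then F a else 0.
Proof.
move=> ut; case: ifP => h.
  by rewrite -big_filter (filter_pred1_uniq ut h) big_seq1.
by apply: big1_seq => x /andP [/eqP -> ]; rewrite h.
Qed.

Lemma sum_pair (V : zmodType) c (F : passage -> V) t : uniq t ->
  \sum_(x <- t | x.1 == c) F x =
  (if (c,true) \in t then F (c,true) else 0) + (if (c,false) \in t then F (c,false) else 0).
Proof.
move=> ut; rewrite (bigID (fun x : passage => x.2)) /=.
rewrite -!sum_pred1_seq //; congr (_ + _); apply: eq_bigl => [[c' b]] /=;
  by rewrite xpair_eqE; case: b; rewrite ?andbT ?andbF.
Qed.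

Lemma take_cat_le (T : Type) (s1 s2 : seq T) k : (k <= size s1)%N ->
  take k (s1 ++ s2) = take k s1.
Proof. exact: takel_cat. Qed.

Lemma take_addn (T : Type) (s1 s2 : seq T) j :
  take (size s1 + j) (s1 ++ s2) = s1 ++ take j s2.
Proof. by rewrite take_cat ltnNge leq_addr /= addKn. Qed.

Lemma take_filter (P : pred passage) p s k : P p -> (k <= 1)%N ->
  take (index p (filter P s) + k) (filter P s) = filter P (take (index p s + k) s).
Proof.
move=> Pp hk; elim: s => [|x s IH] /=; first by [].  
case: (x =P p) => [-> | ne].
  rewrite Pp /= eqxx /=; clear IH; case: k hk => [|[|]] //= _; by rewrite Pp !take0.
have nx : (x == p) = false by apply/eqP.
case Px: (P x) => /=; rewrite ?nx ?Px /= -?IH //.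
Qed.

Section Frame.
Variable n : nat.
Implicit Types D : gdiag n.

Definition T D (c : nat) (m : mono) : int :=
  sg D c * ((\sum_(i < n | (c, true) \in gw D i) ((mkey i (Wbi D c) == m) : nat))%N%:Z
               - ((m == None) : nat)%:Z).

Lemma pcoefE D m : pcoef D m = \sum_(c <- crossings D) T D c m.
Proof. by []. Qed.

Lemma in_cross D i x : x \in gw D i -> x.1 \in crossings D.
Proof.
move=> h; rewrite mem_undup; apply/flatten_mapP; exists i; first by rewrite mem_enum.
exact: map_f.
Qed.

Lemma S_congr D D' t : {in crossings D', gsg D' =1 gsg D} ->
  (forall x, x \in t -> x.1 \in crossings D') -> S D' t = S D t.
Proof.
move=> hs ht; apply: eq_big_seq => x /ht hx; by rewrite /dch /sg hs.
Qed.

Lemma PS_congr D D' p : (forall i, (p \in gw D' i) = (p \in gw D i)) ->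
  (forall i, p \in gw D i -> S D' (take (index p (gw D' i)) (gw D' i)) =
                             S D (take (index p (gw D i)) (gw D i))) ->
  PS D' p = PS D p.
Proof.
move=> hm he; rewrite /PS; under eq_bigl do rewrite hm.
by apply: eq_bigr => i /he.
Qed.

Lemma PSa_congr D D' p : (forall i, (p \in gw D' i) = (p \in gw D i)) ->
  (forall i, p \in gw D i -> S D' (take (index p (gw D' i)).+1 (gw D' i)) =
                             S D (take (index p (gw D i)).+1 (gw D i))) ->
  PSa D' p = PSa D p.
Proof.
move=> hm he; rewrite /PSa; under eq_bigl do rewrite hm.
by apply: eq_bigr => i /he.
Qed.

Lemma T_congr D D' c m : wf D -> wf D' -> sg D' c = sg D c ->
  (forall i b, ((c,b) \in gw D' i) = ((c,b) \in gw D i)) ->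
  PS D' (c,true) = PS D (c,true) -> PSa D' (c,false) = PSa D (c,false) ->
  T D' c m = T D c m.
Proof.
move=> w w' hs hm h1 h2.
have HW : Wbi D' c = Wbi D c.
  rewrite !Wbi_eq // h1 h2 /VV; congr (_ + _ - (_ + _));
  by apply: eq_bigl => i; rewrite hm.
by rewrite /T hs HW; under eq_bigl do rewrite hm.
Qed.

Lemma crossings_filter D D' (keep : pred nat) :
  (forall i, gw D' i = filter (fun x => keep x.1) (gw D i)) ->
  crossings D' =i filter keep (crossings D).
Proof.
move=> hw x; rewrite /crossings mem_filter !mem_undup.
apply/flatten_mapP/andP => [[i _ /mapP [y hy ->]] | [kx /flatten_mapP [i _ /mapP [y hy hxy]]]].
  rewrite hw mem_filter in hy; case/andP: hy => ky hy; split => //.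
  apply/flatten_mapP; exists i; first by rewrite mem_enum.
  exact: map_f.
exists i; first by rewrite mem_enum.
apply/mapP; exists y => //; by rewrite hw mem_filter -hxy kx.
Qed.

Definition Zcond D (keep : pred nat) := forall i p k, keep p.1 -> p \in gw D i -> (k <= 1)%N ->
  \sum_(x <- take (index p (gw D i) + k) (gw D i) | ~~ keep x.1) dch D x = 0.

Lemma filter_S D D' (keep : pred nat) i p k :
  (forall i, gw D' i = filter (fun x => keep x.1) (gw D i)) ->
  {in crossings D', gsg D' =1 gsg D} -> Zcond D keep ->
  keep p.1 -> p \in gw D i -> (k <= 1)%N ->
  S D' (take (index p (gw D' i) + k) (gw D' i)) = S D (take (index p (gw D i) + k) (gw D i)).
Proof.
move=> hw hs hz kp pin hk.
rewrite (@S_congr D D') //; last first.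
  move=> x /mem_take hx; exact: (in_cross hx).
rewrite hw take_filter // /S big_filter.
by rewrite [in RHS](bigID (fun x : passage => keep x.1)) /= (hz i p k) // addr0.
Qed.

Lemma filter_T D D' (keep : pred nat) c m : wf D -> wf D' ->
  (forall i, gw D' i = filter (fun x => keep x.1) (gw D i)) ->
  {in crossings D', gsg D' =1 gsg D} -> Zcond D keep ->
  keep c -> c \in crossings D' -> T D' c m = T D c m.
Proof.
move=> w w' hw hs hz kc cin.
apply: T_congr => //.
- by rewrite /sg hs.
- by move=> i b; rewrite hw mem_filter /= kc.
- apply: PS_congr; first by move=> i; rewrite hw mem_filter /= kc.
  move=> i pin; have := filter_S hw hs hz (p := (c,true)) kc pin (isT : (0 <= 1)%N).
  by rewrite !addn0.
- apply: PSa_congr; first by move=> i; rewrite hw mem_filter /= kc.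
  move=> i pin; have := filter_S hw hs hz (p := (c,false)) kc pin (isT : (1 <= 1)%N).
  by rewrite !addn1.
Qed.

Lemma filter_pcoef D D' (keep : pred nat) m : wf D -> wf D' ->
  (forall i, gw D' i = filter (fun x => keep x.1) (gw D i)) ->
  {in crossings D', gsg D' =1 gsg D} -> Zcond D keep ->
  pcoef D m = pcoef D' m + \sum_(c <- crossings D | ~~ keep c) T D c m.
Proof.
move=> w w' hw hs hz.
rewrite !pcoefE (bigID keep) /=; congr (_ + _).
have hp : perm_eq (crossings D') (filter keep (crossings D)).
  apply: uniq_perm; [exact: undup_uniq | exact/filter_uniq/undup_uniq |].
  exact: crossings_filter.
rewrite (perm_big _ hp) -big_filter; apply: eq_big_seq => c.
rewrite mem_filter => /andP [kc cin]; apply/esym/filter_T => //.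
by rewrite (crossings_filter hw) mem_filter kc.
Qed.

Lemma adjP s p q : uniq s -> adj s p q ->
  [/\ p \in s, q \in s & index q s = (index p s).+1].
Proof.
move=> us /hasP [k _ /andP [/andP [hk /eqP hp] /eqP hq]].
have hk' : (k < size s)%N by apply: ltnW.
rewrite -hp -hq !mem_nth //; split => //.
by rewrite !index_uniq.
Qed.

Lemma pair_prefix D u v i0 l p k : wf D ->
  u \in gw D i0 -> v \in gw D i0 -> index v (gw D i0) = (index u (gw D i0)).+1 ->
  p \in gw D l -> p != u -> p != v -> (k <= 1)%N ->
  (u \in take (index p (gw D l) + k) (gw D l)) = (v \in take (index p (gw D l) + k) (gw D l)).
Proof.
move=> w hu hv hi pl pu pv hk.
case: (l =P i0) => [el | nl]; last first.
  have hu' : u \notin gw D l by apply/negP => h; apply: nl; exact: (wf_comp w h hu).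
  have hv' : v \notin gw D l by apply/negP => h; apply: nl; exact: (wf_comp w h hv).
  apply/idP/idP => /mem_take h; [by rewrite h in hu' | by rewrite h in hv'].
subst l; rewrite !in_take // hi.
have ipu : index p (gw D i0) != index u (gw D i0).
  apply: contra pu => /eqP e; apply/eqP; exact: (index_inj p pl hu e).
have ipv : index p (gw D i0) != index v (gw D i0).
  apply: contra pv => /eqP e; apply/eqP; exact: (index_inj p pl hv e).
rewrite hi in ipv; move: ipu ipv hk.
set a := index p _; set b := index u _.
case: k => [|[|]] //= h1 h2 _; apply/idP/idP => h; lia.
Qed.

End Frame.


Section Moves12.
Variable n : nat.
Implicit Types D : gdiag n.

Lemma S_after D s p : p \in s ->
  S D (take (index p s).+1 s) = S D (take (index p s) s) + dch D p.
Proof.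
move=> ps; rewrite (take_nth (0%N,false)) ?index_mem // /S -cats1 big_cat big_seq1.
by rewrite nth_index.
Qed.

Lemma dch_sum D c : dch D (c,true) + dch D (c,false) = 0.
Proof. by rewrite /dch /= addNr. Qed.

Lemma PS_at D p i : wf D -> p \in gw D i -> PS D p = S D (take (index p (gw D i)) (gw D i)).
Proof. move=> w h; exact: (sum_comp _ _ w h). Qed.
Lemma PSa_at D p i : wf D -> p \in gw D i ->
  PSa D p = S D (take (index p (gw D i)).+1 (gw D i)).
Proof. move=> w h; exact: (sum_comp _ _ w h). Qed.
Lemma VV_at D p i : wf D -> p \in gw D i -> VV D p = lvar i false + lvar i true.
Proof. move=> w h; exact: (sum_comp _ _ w h). Qed.

Lemma T_at D c m i : wf D -> (c,true) \in gw D i ->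
  T D c m = sg D c * (((mkey i (Wbi D c) == m) : nat)%:Z - ((m == None) : nat)%:Z).
Proof. move=> w h; by rewrite /T (sum_comp _ _ w h). Qed.

Lemma r1_inv D D' m : wf D -> wf D' -> r1step D D' -> pcoef D m = pcoef D' m.
Proof.
move=> w w' [c [b [[i0 hadj] [hw hs]]]].
pose keep := fun x : nat => x != c.
have hw' : forall i, gw D' i = filter (fun x => keep x.1) (gw D i) by [].
have [hu hv hi] := adjP (wf_uniq i0 w) hadj.
have hz : Zcond D keep.
  move=> i p k kp pin hk; rewrite /keep; under eq_bigl do rewrite negbK.
  rewrite sum_pair; last exact/take_uniq/wf_uniq.
  have pu : p != (c,b) by apply: contra kp => /eqP ->.
  have pv : p != (c,~~b) by apply: contra kp => /eqP ->.
  have E := pair_prefix w hu hv hi pin pu pv hk.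
  case: b E {hadj hu hv hi pu pv} => /= ->; case: ifP => _;
    by rewrite ?addr0 ?dch_sum // addrC dch_sum.
rewrite (filter_pcoef m w w' hw' hs hz).
under eq_bigl do rewrite /keep negbK.
rewrite sum_pred1_seq ?undup_uniq // (in_cross hu) /=.
have [ht hf] : (c,true) \in gw D i0 /\ (c,false) \in gw D i0 by case: b hu hv {hadj hi}.
rewrite (T_at m w ht).
have -> : Wbi D c = 0.
  rewrite Wbi_eq // (VV_at w ht) (VV_at w hf) (PS_at w ht) (PSa_at w hf).
  case: b hu hv hi {hadj} => /= hu hv hi.
    by rewrite (S_after _ hf) hi (S_after _ ht) -(addrA (S D _)) dch_sum addr0 subrr.
  by rewrite hi subrr.
by rewrite /mkey eqxx [m == None]eq_sym subrr mulr0 addr0.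
Qed.


Lemma W_shape (X Y : @linform n) a b a' b' : a - b = a' - b' ->
  X + lcst a - (Y + lcst b) = X + lcst a' - (Y + lcst b').
Proof. by move=> h; rewrite !opprD [LHS]addrACA [RHS]addrACA -!lcstB h. Qed.

Lemma sg_opp D c d : gsg D c != gsg D d -> sg D d = - sg D c.
Proof. by rewrite /sg; case: (gsg D c); case: (gsg D d). Qed.

Lemma r2_inv D D' m : wf D -> wf D' -> r2step D D' -> pcoef D m = pcoef D' m.
Proof.
move=> w w' [c [d [ncd [nsg [[i hadj1] [[j hadj2] [hw hs]]]]]]].
pose keep := fun x : nat => (x != c) && (x != d).
have hw' : forall i, gw D' i = filter (fun x => keep x.1) (gw D i) by [].
have [hct hdt hi] := adjP (wf_uniq i w) hadj1.
have [u [v [[hu hv hj] huv]]] : exists u v,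
    [/\ u \in gw D j, v \in gw D j & index v (gw D j) = (index u (gw D j)).+1] /\
    ((u, v) = ((c,false), (d,false)) \/ (u, v) = ((d,false), (c,false))).
  case/orP: hadj2 => h; have [h1 h2 h3] := adjP (wf_uniq j w) h.
    by exists (c,false), (d,false); split => //; left.
  by exists (d,false), (c,false); split => //; right.
have [hcf hdf] : (c,false) \in gw D j /\ (d,false) \in gw D j.
  by case: huv hu hv => [[-> ->] | [-> ->]] hu hv.
have hsd := sg_opp nsg.
have E0 (I : Type) (f : I -> nat) (F : I -> int) t :
    \sum_(x <- t | ~~ keep (f x)) F x =
    \sum_(x <- t | f x == c) F x + \sum_(x <- t | f x == d) F x.
  rewrite (bigID (fun x => f x == c)) /=; congr (_ + _); apply: eq_bigl => x;
  rewrite /keep; case: (f x =P c) => e1; case: (f x =P d) => e2 //=;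
  by move: ncd; rewrite -e1 -e2 eqxx.
have hz : Zcond D keep.
  move=> l p k kp pin hk.
  rewrite (E0 _ (fun x : passage => x.1)).
  have ut : uniq (take (index p (gw D l) + k) (gw D l)) by exact/take_uniq/wf_uniq.
  rewrite !sum_pair //.
  have pu : forall b, p != (c,b) by move=> b; apply/eqP => e; move: kp; rewrite e /keep /= eqxx.
  have pv : forall b, p != (d,b).
    by move=> b; apply/eqP => e; move: kp; rewrite e /keep /= eqxx andbF.
  rewrite (pair_prefix w hct hdt hi pin (pu _) (pv _) hk).
  have E2 : ((c,false) \in take (index p (gw D l) + k) (gw D l)) =
            ((d,false) \in take (index p (gw D l) + k) (gw D l)).
    case: huv hu hv hj => [[eu ev] | [eu ev]]; subst u v => hu hv hj.
      exact: (pair_prefix w hu hv hj pin (pu _) (pv _) hk).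
    exact/esym/(pair_prefix w hu hv hj pin (pv _) (pu _) hk).
  rewrite E2 /dch /= hsd; do 2 case: ifP => _; rewrite ?addr0 ?add0r //; ring.
rewrite (filter_pcoef m w w' hw' hs hz).
have cin := in_cross hct; have din := in_cross hdt.
rewrite (E0 _ id) !sum_pred1_seq ?undup_uniq // cin din /=.
rewrite (T_at m w hct) (T_at m w hdt) hsd.
have -> : Wbi D d = Wbi D c; last by rewrite mulNr addrN addr0.
rewrite !Wbi_eq // (VV_at w hct) (VV_at w hdt) (VV_at w hcf) (VV_at w hdf).
rewrite (PS_at w hct) (PS_at w hdt) (PSa_at w hcf) (PSa_at w hdf) hi (S_after _ hct).
case: huv hu hv hj => [[eu ev] | [eu ev]]; subst u v => hu hv hj.
  rewrite (S_after _ hdf) hj /dch /= hsd.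
  apply: W_shape; ring.
rewrite (S_after _ hcf) hj /dch /= ?hsd.
apply: W_shape; ring.

Qed.

End Moves12.


Definition dl (F : passage -> int) (g : bool) (a b p : passage) : int :=
  if g then (if p == a then F b else 0) - (if p == b then F a else 0) else 0.

Lemma swap_core (F : passage -> int) (T0 R : seq passage) a b :
  uniq (T0 ++ a :: b :: R) ->
  [/\ perm_eq (T0 ++ b :: a :: R) (T0 ++ a :: b :: R),
      (forall p, p != a -> p != b -> index p (T0 ++ b :: a :: R) = index p (T0 ++ a :: b :: R)) &
      (forall p e, p \in T0 ++ a :: b :: R -> (e <= 1)%N ->
         \sum_(x <- take (index p (T0 ++ b :: a :: R) + e) (T0 ++ b :: a :: R)) F x =
         \sum_(x <- take (index p (T0 ++ a :: b :: R) + e) (T0 ++ a :: b :: R)) F x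
           + dl F true a b p)].
Proof.
move=> u.
have [aT bT ab aR bR] : [/\ a \notin T0, b \notin T0, a != b, a \notin R & b \notin R].
  move: (u); rewrite cat_uniq => /and3P [_ /hasPn H h2].
  move: h2; rewrite !cons_uniq in_cons negb_or => /and3P [/andP [h3 h4] h5 _].
  split => //; apply: H; by rewrite !inE eqxx ?orbT.
split.
- by rewrite perm_cat2l (perm_catCA [:: b] [:: a] R).
- move=> p pa pb; rewrite !index_cat; case: ifP => // _ /=.
  by rewrite ![_ == p]eq_sym (negbTE pa) (negbTE pb).
move=> p e pin he; rewrite !index_cat /dl.
case: ifP => pT.
  have -> : (p == a) = false by apply: contraNF aT => /eqP <-.
  have -> : (p == b) = false by apply: contraNF bT => /eqP <-.
  have hi : (index p T0 + e <= size T0)%N.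
    have h : (index p T0 < size T0)%N by rewrite index_mem. lia.
  by rewrite !take_cat_le // subrr addr0.
rewrite -!addnA !take_addn !big_cat -addrA; congr (_ + _).
move: pin; rewrite mem_cat pT /= !inE => /or3P [/eqP -> | /eqP -> | pR].
- rewrite eqxx (negbTE ab) eq_sym (negbTE ab) /=.
  case: e he => [|[|]] //= _; rewrite ?take0 !big_cons !big_nil; ring.
- rewrite eqxx (negbTE ab) eq_sym (negbTE ab) /=.
  case: e he => [|[|]] //= _; rewrite ?take0 !big_cons !big_nil; ring.
have pa : (a == p) = false by apply: contraNF aR => /eqP ->.
have pb : (b == p) = false by apply: contraNF bR => /eqP ->.
rewrite pa pb eq_sym pa eq_sym pb /= !big_cons; ring.
Qed.

Lemma step_if (F : passage -> int) (s : seq passage) (g : bool) (a b : passage) (k : nat) : uniq s ->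
  (g -> [/\ a \in s, b \in s, index a s = k & index b s = k.+1]) ->
  [/\ perm_eq (swp_if g k s) s,
      (forall p, p != a -> p != b -> index p (swp_if g k s) = index p s) &
      (forall p e, p \in s -> (e <= 1)%N ->
         \sum_(x <- take (index p (swp_if g k s) + e) (swp_if g k s)) F x =
         \sum_(x <- take (index p s + e) s) F x + dl F g a b p)].
Proof.
move=> us; case: g => [/(_ isT) [ha hb hia hib] | _] /=; last first.
  by split => // p e _ _; rewrite /dl addr0.
have hk : (k.+1 < size s)%N by rewrite -hib index_mem.
have ea : nth (0%N,false) s k = a by rewrite -hia nth_index.
have eb : nth (0%N,false) s k.+1 = b by rewrite -hib nth_index.
have sp : s = take k s ++ a :: b :: drop k.+2 s.
  rewrite -{1}(cat_take_drop k s) (drop_nth (0%N,false)) ?ea; last by apply: ltnW.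
  by rewrite (drop_nth (0%N,false)) ?eb.
have sw : swp s k = take k s ++ b :: a :: drop k.+2 s by rewrite /swp ea eb.
have us' : uniq (take k s ++ a :: b :: drop k.+2 s) by rewrite -sp.
have := swap_core F us'; rewrite -sp -sw => [[h1 h2 h3]].
by split.
Qed.

Lemma three (F : passage -> int) (s : seq passage) (g1 g2 g3 : bool) (a1 b1 a2 b2 a3 b3 : passage) (k1 k2 k3 : nat) :
  uniq s -> uniq [:: a1; b1; a2; b2; a3; b3] ->
  (g1 -> [/\ a1 \in s, b1 \in s, index a1 s = k1 & index b1 s = k1.+1]) ->
  (g2 -> [/\ a2 \in s, b2 \in s, index a2 s = k2 & index b2 s = k2.+1]) ->
  (g3 -> [/\ a3 \in s, b3 \in s, index a3 s = k3 & index b3 s = k3.+1]) ->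
  let s' := swp_if g3 k3 (swp_if g2 k2 (swp_if g1 k1 s)) in
  perm_eq s' s /\ forall p e, p \in s -> (e <= 1)%N ->
    \sum_(x <- take (index p s' + e) s') F x =
    \sum_(x <- take (index p s + e) s) F x + dl F g1 a1 b1 p + dl F g2 a2 b2 p + dl F g3 a3 b3 p.
Proof.
move=> us U H1 H2 H3 s'.
move: U => /=; rewrite !inE !negb_or.
move=> /andP [/and5P [a1b1 a1a2 a1b2 a1a3 a1b3]] /andP [/and4P [b1a2 b1b2 b1a3 b1b3]].
move=> /andP [/and3P [a2b2 a2a3 a2b3]] /andP [/andP [b2a3 b2b3]] /andP [a3b3 _].
have [p1 i1 d1] := step_if F us H1.
have us1 : uniq (swp_if g1 k1 s) by rewrite (perm_uniq p1).
have H2' : g2 -> [/\ a2 \in swp_if g1 k1 s, b2 \in swp_if g1 k1 s,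
                    index a2 (swp_if g1 k1 s) = k2 & index b2 (swp_if g1 k1 s) = k2.+1].
  move=> /H2 [h1 h2 h3 h4]; rewrite !(perm_mem p1) !i1 //;
    by rewrite ?(eq_sym a2) ?(eq_sym b2).
have [p2 i2 d2] := step_if F us1 H2'.
have us2 : uniq (swp_if g2 k2 (swp_if g1 k1 s)) by rewrite (perm_uniq p2).
have H3' : g3 -> [/\ a3 \in swp_if g2 k2 (swp_if g1 k1 s), b3 \in swp_if g2 k2 (swp_if g1 k1 s),
          index a3 (swp_if g2 k2 (swp_if g1 k1 s)) = k3 &
          index b3 (swp_if g2 k2 (swp_if g1 k1 s)) = k3.+1].
  move=> /H3 [h1 h2 h3 h4]; rewrite !(perm_mem p2) !(perm_mem p1) !i2 ?i1 //;
    by rewrite ?(eq_sym a3) ?(eq_sym b3).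
have [p3 i3 d3] := step_if F us2 H3'.
split; first by apply: perm_trans p3 (perm_trans p2 p1).
move=> p e ps he.
rewrite /s' d3 ?d2 ?d1 ?(perm_mem p2) ?(perm_mem p1) //.
Qed.

Lemma dl_fix F (g : bool) a b p : (p == a -> g) -> (p == b -> g) -> dl F g a b p = dl F true a b p.
Proof.
rewrite /dl; case: g => // ha hb.
case: (p =P a) => [/eqP /ha|_] //; case: (p =P b) => [/eqP /hb|_] //; by rewrite subr0.
Qed.

Lemma r3_sign (gx gy gz o1 o2 o3 : bool) :
  let X : int := if gx then 1 else -1 in
  let Y : int := if gy then 1 else -1 in
  let Z : int := if gz then 1 else -1 in
  pm o2 * X = pm o3 * Y -> pm o2 * Z = pm o1 * Y -> pm o1 * X = pm o3 * Z.
Proof. by case: gx; case: gy; case: gz; case: o1; case: o2; case: o3. Qed.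

Section R3.
Variable n : nat.
Implicit Types D : gdiag n.

Lemma r3_arith D x y z c (o1 o2 o3 : bool) :
  x != y -> y != z -> x != z ->
  pm o2 * sg D x = pm o3 * sg D y -> pm o2 * sg D z = pm o1 * sg D y ->
  let a1 := if o1 then (x,true) else (y,true) in
  let b1 := if o1 then (y,true) else (x,true) in
  let a2 := if o2 then (x,false) else (z,true) in
  let b2 := if o2 then (z,true) else (x,false) in
  let a3 := if o3 then (y,false) else (z,false) in
  let b3 := if o3 then (z,false) else (y,false) in
  dl (dch D) true a1 b1 (c,true) + dl (dch D) true a2 b2 (c,true) + dl (dch D) true a3 b3 (c,true)
  = dl (dch D) true a1 b1 (c,false) + dl (dch D) true a2 b2 (c,false) + dl (dch D) true a3 b3 (c,false).
Proof.
move=> xy yz xz h1 h2.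
have h3 := r3_sign h1 h2.
have yx : (y == x) = false by rewrite eq_sym; apply/negbTE.
have zy : (z == y) = false by rewrite eq_sym; apply/negbTE.
have zx : (z == x) = false by rewrite eq_sym; apply/negbTE.
move: (negbTE xy) (negbTE yz) (negbTE xz) => xy' yz' xz'.
rewrite /dl /dch /=.
move: h1 h2 h3.
have [cx cy cz] : [/\ (c == x) = (c == x), (c == y) = (c == y) & (c == z) = (c == z)] by [].
case: (c =P x) cx => [-> _|/eqP/negbTE nx _]; last (case: (c =P y) cy => [-> _|/eqP/negbTE ny _]);
  last (case: (c =P z) cz => [-> _|/eqP/negbTE nz _]);
case: o1; case: o2; case: o3 => /= h1 h2 h3;
rewrite !xpair_eqE /= ?andbT ?andbF ?eqxx ?xy' ?xz' ?yx ?yz' ?zx ?zy ?nx ?ny ?nz //=; rewrite /dch /=; lia.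
Qed.
End R3.

Lemma seg_cases s k (p q : passage) : p != q -> seg s k p q -> exists o : bool,
  [/\ (k.+1 < size s)%N, nth (0%N,false) s k = (if o then p else q),
      nth (0%N,false) s k.+1 = (if o then q else p) & (nth (0%N,false) s k == p) = o].
Proof.
rewrite /seg => pq /andP [hk /orP [/andP [/eqP e1 /eqP e2] | /andP [/eqP e1 /eqP e2]]].
  by exists true; rewrite e1 e2 eqxx.
by exists false; rewrite e1 e2 eq_sym (negbTE pq).
Qed.

Lemma U_lemma (x y z : nat) (o1 o2 o3 : bool) : x != y -> y != z -> x != z ->
  uniq [:: if o1 then (x,true) else (y,true); if o1 then (y,true) else (x,true);
           if o2 then (x,false) else (z,true); if o2 then (z,true) else (x,false);
           if o3 then (y,false) else (z,false); if o3 then (z,false) else (y,false)].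
Proof.
move=> xy yz xz.
have yx : (y == x) = false by rewrite eq_sym; apply/negbTE.
have zy : (z == y) = false by rewrite eq_sym; apply/negbTE.
have zx : (z == x) = false by rewrite eq_sym; apply/negbTE.
case: o1; case: o2; case: o3;
rewrite /= !inE !xpair_eqE /= ?andbT ?andbF ?(negbTE xy) ?(negbTE yz) ?(negbTE xz) ?yx ?zy ?zx //.
Qed.

Section R3b.
Variable n : nat.
Implicit Types D : gdiag n.

Lemma crossings_mem D D' : (forall i, gw D' i =i gw D i) -> crossings D' =i crossings D.
Proof.
move=> hm x; rewrite /crossings !mem_undup.
apply/flatten_mapP/flatten_mapP => [[i hi /mapP [y hy ->]] | [i hi /mapP [y hy ->]]];
  exists i => //; apply: map_f; by rewrite ?hm // -hm.
Qed.

Lemma S_congr2 D D' (A : pred nat) t : {in A, gsg D' =1 gsg D} ->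
  (forall x, x \in t -> x.1 \in A) -> S D' t = S D t.
Proof.
move=> hs ht; apply: eq_big_seq => x /ht hx; by rewrite /dch /sg hs.
Qed.

Lemma word_facts D i k (a b : passage) : wf D -> (k.+1 < size (gw D i))%N ->
  nth (0%N,false) (gw D i) k = a -> nth (0%N,false) (gw D i) k.+1 = b ->
  [/\ a \in gw D i, b \in gw D i, index a (gw D i) = k & index b (gw D i) = k.+1].
Proof.
move=> w hk ea eb; have u := wf_uniq i w.
have hk' : (k < size (gw D i))%N by apply: ltnW.
by rewrite -ea -eb !mem_nth // !index_uniq.
Qed.

Lemma r3_inv D D' m : wf D -> wf D' -> r3step D D' -> pcoef D m = pcoef D' m.
Proof.
move=> w w' [i1 [i2 [i3 [k1 [k2 [k3 [x [y [z [dist [s1 [s2 [s3 [sgn [hw hs]]]]]]]]]]]]]]].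
case/and3P: dist => xy yz xz.
have ne1 : (x,true) != (y,true) by rewrite xpair_eqE andbT.
have ne2 : (x,false) != (z,true) by rewrite xpair_eqE andbF.
have ne3 : (y,false) != (z,false) by rewrite xpair_eqE andbT.
have [o1 [hk1 ea1 eb1 eo1]] := seg_cases ne1 s1.
have [o2 [hk2 ea2 eb2 eo2]] := seg_cases ne2 s2.
have [o3 [hk3 ea3 eb3 eo3]] := seg_cases ne3 s3.
move: sgn; cbv zeta; rewrite eo1 eo2 eo3 => [[sg1 sg2]].
have [ha1 hb1 hia1 hib1] := word_facts w hk1 ea1 eb1.
have [ha2 hb2 hia2 hib2] := word_facts w hk2 ea2 eb2.
have [ha3 hb3 hia3 hib3] := word_facts w hk3 ea3 eb3.
pose A1 := if o1 then (x,true) else (y,true).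
pose B1 := if o1 then (y,true) else (x,true).
pose A2 := if o2 then (x,false) else (z,true).
pose B2 := if o2 then (z,true) else (x,false).
pose A3 := if o3 then (y,false) else (z,false).
pose B3 := if o3 then (z,false) else (y,false).
have U : uniq [:: A1; B1; A2; B2; A3; B3].
  exact: U_lemma.
have H1 i : i == i1 -> [/\ A1 \in gw D i, B1 \in gw D i, index A1 (gw D i) = k1 & index B1 (gw D i) = k1.+1].
  by move/eqP => ->.
have H2 i : i == i2 -> [/\ A2 \in gw D i, B2 \in gw D i, index A2 (gw D i) = k2 & index B2 (gw D i) = k2.+1].
  by move/eqP => ->.
have H3 i : i == i3 -> [/\ A3 \in gw D i, B3 \in gw D i, index A3 (gw D i) = k3 & index B3 (gw D i) = k3.+1].
  by move/eqP => ->.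
have TH i := three (dch D) (wf_uniq i w) U (H1 i) (H2 i) (H3 i).
have hm : forall i, gw D' i =i gw D i.
  move=> i; rewrite hw; exact: (perm_mem (TH i).1).
have hc := crossings_mem hm.
pose Dl p := dl (dch D) true A1 B1 p + dl (dch D) true A2 B2 p + dl (dch D) true A3 B3 p.
have PSE : forall p ip e, p \in gw D ip -> (e <= 1)%N ->
    S D' (take (index p (gw D' ip) + e) (gw D' ip)) =
    S D (take (index p (gw D ip) + e) (gw D ip)) + Dl p.
  move=> p ip e pin he.
  rewrite (@S_congr2 D D' (mem (crossings D))) //; last first.
    move=> q /mem_take; rewrite -hc; exact: in_cross.
  have f1 : dl (dch D) (ip == i1) A1 B1 p = dl (dch D) true A1 B1 p.
    by apply: dl_fix => /eqP e0; subst p; apply/eqP; [exact: (wf_comp w pin ha1) | exact: (wf_comp w pin hb1)].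
  have f2 : dl (dch D) (ip == i2) A2 B2 p = dl (dch D) true A2 B2 p.
    by apply: dl_fix => /eqP e0; subst p; apply/eqP; [exact: (wf_comp w pin ha2) | exact: (wf_comp w pin hb2)].
  have f3 : dl (dch D) (ip == i3) A3 B3 p = dl (dch D) true A3 B3 p.
    by apply: dl_fix => /eqP e0; subst p; apply/eqP; [exact: (wf_comp w pin ha3) | exact: (wf_comp w pin hb3)].
  by rewrite hw /S (TH ip).2 // f1 f2 f3 /Dl !addrA.
rewrite !pcoefE.
have hp : perm_eq (crossings D') (crossings D) by apply: uniq_perm; rewrite ?undup_uniq.
rewrite [RHS](perm_big _ hp); apply: eq_big_seq => c cin.
have [[it ht] [jf hf]] := cross_occ w cin.
have ht' : (c,true) \in gw D' it by rewrite hm.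
have hf' : (c,false) \in gw D' jf by rewrite hm.
rewrite /T /sg hs //.
have -> : Wbi D' c = Wbi D c; last first.
  congr (_ * (Posz _ - _)); apply: eq_bigl => i; by rewrite hm.
rewrite !Wbi_eq // (VV_at w' ht') (VV_at w ht) (VV_at w' hf') (VV_at w hf).
rewrite (PS_at w' ht') (PS_at w ht) (PSa_at w' hf') (PSa_at w hf).
have := PSE (c,true) it 0%N ht isT; rewrite !addn0 => ->.
have := PSE (c,false) jf 1%N hf isT; rewrite !addn1 => ->.
apply: W_shape.
have E := r3_arith c xy yz xz sg1 sg2; cbv zeta in E.
rewrite /Dl /A1 /B1 /A2 /B2 /A3 /B3 E; ring.
Qed.

End R3b.


Lemma rstep_inv n (D D' : gdiag n) m : wf D -> wf D' -> rstep D D' -> pcoef D m = pcoef D' m.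
Proof.
move=> w w' [h|[h|h]]; [exact: r1_inv | exact: r2_inv | exact: r3_inv].
Qed.

Unset Implicit Arguments.

Theorem proposition4 :
  (forall (n : nat) (D D' : gdiag n),
      wf D -> compatible D ->
      clos_refl_sym_trans (gdiag n) rmove D D' ->
      forall m : mono, pcoef D m = pcoef D' m) /\
  (forall (n : nat) (D : gdiag n),
      wf D -> compatible D ->
      forall e : linform, spec (pcoef D) e = kpoly lcst (fun i => lvar i false + lvar i true) D e) /\
  (forall (K : gdiag 1) (s : int),
      wf K -> forall m : mono, pcoef K m = embed1 (kpoly id (fun _ => s) K) m).
Proof.
split; [|split].
- move=> n D D' _ _ H m; elim: H => [x y [wx [wy [h|h]]] | x | x y _ IH | x y z _ IH1 _ IH2].
  + exact: rstep_inv.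
  + exact/esym/rstep_inv.
  + by [].
  + by rewrite IH.
  + by rewrite IH1 IH2.
- move=> n D w _ e; exact: part2.
- move=> K s w m; exact: part3.
Qed.
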